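(* Let $p,q$ be integers with $2\le p<q\le5p-1$ and fix $\beta_3\ge0$. Let $r_{\beta_3}$ be the transition curve: for $\beta_1<\beta_1^c$, $r_{\beta_3}(\beta_1)$ is the unique value of $\beta_2$ for which $u\mapsto l(u)=\beta_1u+\beta_2u^p+\beta_3u^q-\tfrac12u\log u-\tfrac12(1-u)\log(1-u)$ has two distinct global maximizers on $[0,1]$. Then $$\lim_{\beta_1\to-\infty}\big|r_{\beta_3}(\beta_1)+\beta_1+\beta_3\big|=0.$$
   Context: Here $\beta_1^c=\tfrac12\log\tfrac{u_0}{1-u_0}-\tfrac{1}{2(p-1)(1-u_0)}+\tfrac{pu_0-(p-1)}{2(p-1)(q-1)(1-u_0)^2}$, where $u_0\in(0,1)$ is the unique solution of $\beta_3=\frac{pu_0-(p-1)}{2q(q-1)(q-p)u_0^{q-1}(1-u_0)^2}$; existence and uniqueness of $r_{\beta_3}(\beta_1)$ for each $\beta_1<\beta_1^c$ is part of the standing setup. *)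

(* Defs.v *)
From Stdlib Require Import Reals Lra.
Open Scope R_scope.

Definition xlogx (x : R) : R := if Req_EM_T x 0 then 0 else x * ln x.

Definition lfun (p q : nat) (b1 b2 b3 u : R) : R :=
  b1 * u + b2 * u ^ p + b3 * u ^ q - / 2 * xlogx u - / 2 * xlogx (1 - u).

Definition is_global_max01 (f : R -> R) (u : R) : Prop :=
  0 <= u <= 1 /\ forall v, 0 <= v <= 1 -> f v <= f u.

Definition two_global_max (p q : nat) (b1 b2 b3 : R) : Prop :=
  exists u1 u2, u1 <> u2 /\
    is_global_max01 (lfun p q b1 b2 b3) u1 /\
    is_global_max01 (lfun p q b1 b2 b3) u2.

Definition beta1c (p q : nat) (u0 : R) : R :=
  / 2 * ln (u0 / (1 - u0))
  - / (2 * (INR p - 1) * (1 - u0))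
  + (INR p * u0 - (INR p - 1)) / (2 * (INR p - 1) * (INR q - 1) * (1 - u0) ^ 2).

Definition u0_eq (p q : nat) (b3 u0 : R) : Prop :=
  b3 = (INR p * u0 - (INR p - 1)) /
       (2 * INR q * (INR q - 1) * (INR q - INR p) * u0 ^ (q - 1) * (1 - u0) ^ 2).

(* Main.v *)
Require Import Defs.
From Stdlib Require Import Reals Lra Lia.
From Coquelicot Require Import Coquelicot.
Open Scope R_scope.

Lemma ln_le_m1 y : 0 < y -> ln y <= y - 1.
Proof. intros Hy. pose proof (exp_ineq1_le (ln y)). rewrite exp_ln in H; lra. Qed.

Lemma xlnx_ge x : 0 < x -> x - 1 <= x * ln x.
Proof.
  intros Hx. pose proof (ln_le_m1 (/x) (Rinv_0_lt_compat _ Hx)).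
  rewrite ln_Rinv in H by lra.
  assert (x * (- ln x) <= x * (/x - 1)) by (apply Rmult_le_compat_l; lra).
  rewrite Rmult_minus_distr_l, Rinv_r in H0 by lra. lra.
Qed.

Lemma Gbound w K : 0 < w -> w * (1 - K - ln w) <= exp (- K).
Proof.
  intros Hw. set (x := w * exp K).
  assert (Hx : 0 < x) by (unfold x; apply Rmult_lt_0_compat; [lra| apply exp_pos]).
  assert (Hl : ln x = ln w + K) by (unfold x; rewrite ln_mult, ln_exp; [lra|lra|apply exp_pos]).
  pose proof (xlnx_ge x Hx).
  assert (w = exp (-K) * x).
  { unfold x. rewrite <- Rmult_assoc, (Rmult_comm (exp (-K))), Rmult_assoc, <- exp_plus.
    replace (-K + K) with 0 by ring. rewrite exp_0; ring. }
  rewrite H0. replace (1 - K - ln (exp (- K) * x)) with (1 - ln x).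
  2:{ rewrite ln_mult, ln_exp; [ring | apply exp_pos | lra]. }
  pose proof (exp_pos (-K)).
  assert (x * (1 - ln x) <= 1) by nra.
  nra.
Qed.

Lemma pow01 n x : 0 <= x <= 1 -> 0 <= x ^ n <= 1.
Proof. intros H. induction n; simpl; nra. Qed.

Lemma pow_diff m u v : 0 <= u -> u <= v -> v <= 1 -> v ^ m - u ^ m <= INR m * (v - u).
Proof.
  intros H0 H1 H2. induction m as [|m IH].
  - simpl. lra.
  - rewrite S_INR. simpl.
    pose proof (pow01 m u ltac:(lra)). pose proof (pow01 m v ltac:(lra)).
    assert (v * v ^ m - u * u ^ m = v * (v^m - u^m) + u^m * (v - u)) by ring.
    assert (v * (v^m - u^m) <= INR m * (v - u)).
    { assert (0 <= v^m - u^m) by (pose proof (pow_incr u v m); lra).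
      pose proof (pos_INR m). nra. }
    nra.
Qed.

Lemma pow_dec u m n : 0 <= u <= 1 -> (m <= n)%nat -> u ^ n <= u ^ m.
Proof.
  intros Hu Hmn. replace n with (m + (n - m))%nat by lia.
  rewrite pow_add. pose proof (pow01 m u Hu). pose proof (pow01 (n-m) u Hu). nra.
Qed.

Definition Dl (p q : nat) (b1 b2 b3 u : R) : R :=
  b1 + INR p * b2 * u ^ (pred p) + INR q * b3 * u ^ (pred q) - / 2 * ln u + / 2 * ln (1 - u).

Lemma xlogx_pos x : 0 < x -> xlogx x = x * ln x.
Proof. intros. unfold xlogx. destruct (Req_EM_T x 0); [lra|auto]. Qed.

Lemma lfun_derive p q b1 b2 b3 u : 0 < u < 1 ->
  is_derive (lfun p q b1 b2 b3) u (Dl p q b1 b2 b3 u).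
Proof.
  intros Hu.
  apply is_derive_ext_loc with
    (f := fun x => b1 * x + b2 * x ^ p + b3 * x ^ q - / 2 * (x * ln x) - / 2 * ((1 - x) * ln (1 - x))).
  - assert (Hr : 0 < Rmin u (1 - u)) by (apply Rmin_pos; lra).
    exists (mkposreal _ Hr). intros y Hy.
    unfold ball in Hy; simpl in Hy; unfold AbsRing_ball, abs, minus, plus, opp in Hy; simpl in Hy.
    pose proof (Rmin_l u (1-u)). pose proof (Rmin_r u (1-u)).
    apply Rabs_def2 in Hy.
    unfold lfun. rewrite !xlogx_pos by lra. reflexivity.
  - unfold Dl. auto_derive.
    + lra.
    + replace (1 + - u) with (1 - u) by ring. field. lra.
Qed.

Lemma fermat p q b1 b2 b3 u : 0 < u < 1 -> is_global_max01 (lfun p q b1 b2 b3) u ->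
  Dl p q b1 b2 b3 u = 0.
Proof.
  intros Hu [_ Hm].
  pose proof (lfun_derive p q b1 b2 b3 u Hu) as Hd.
  apply is_derive_Reals in Hd.
  pose (pr := exist (fun l => derivable_pt_lim (lfun p q b1 b2 b3) u l) _ Hd : derivable_pt (lfun p q b1 b2 b3) u).
  pose proof (deriv_maximum _ 0 1 u pr ltac:(lra) ltac:(lra)) as Hz.
  assert (derive_pt _ _ pr = Dl p q b1 b2 b3 u) by reflexivity.
  rewrite <- H. apply Hz. intros x H1 H2. apply Hm. lra.
Qed.

Lemma ln_diff u v : 0 < u -> u <= v -> (v - u) / v <= ln v - ln u.
Proof.
  intros Hu Huv.
  pose proof (ln_le_m1 (u / v) ltac:(apply Rdiv_lt_0_compat; lra)).
  unfold Rdiv in H. rewrite ln_mult, ln_Rinv in H by (try apply Rinv_0_lt_compat; lra).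
  replace ((v - u) / v) with (- (u * / v - 1)) by (field; lra). lra.
Qed.

Lemma term_bound (k a : nat) (b u v : R) : 0 <= u -> u <= v -> v <= 1 ->
  - (INR k * Rmax b 0 * INR a * (v - u)) <= INR k * b * (u ^ a - v ^ a).
Proof.
  intros H0 H1 H2. pose proof (pow_diff a u v H0 H1 H2).
  pose proof (pow_incr u v a ltac:(lra)). pose proof (pos_INR k).
  unfold Rmax; destruct (Rle_dec b 0).
  - assert (0 <= b * (u ^ a - v ^ a)) by nra. nra.
  - assert (b * (v^a - u^a) <= b * (INR a * (v - u))) by (apply Rmult_le_compat_l; lra).
    nra.
Qed.

Lemma Dl_mono p q b1 b2 b3 u v : 0 <= b3 -> 0 < u -> u < v -> v < 1 ->
  (v - u) * (/ 2 * / v + / 2 * / (1 - u)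
     - INR p * Rmax b2 0 * INR (pred p) - INR q * Rmax b3 0 * INR (pred q))
  <= Dl p q b1 b2 b3 u - Dl p q b1 b2 b3 v.
Proof.
  intros Hb3 H0 H1 H2.
  pose proof (term_bound p (pred p) b2 u v ltac:(lra) ltac:(lra) ltac:(lra)).
  pose proof (term_bound q (pred q) b3 u v ltac:(lra) ltac:(lra) ltac:(lra)).
  pose proof (ln_diff u v H0 ltac:(lra)).
  pose proof (ln_diff (1 - v) (1 - u) ltac:(lra) ltac:(lra)).
  unfold Dl.
  replace ((v - u) / v) with ((v - u) * / v) in H3 by (unfold Rdiv; ring).
  replace ((1 - u - (1 - v)) / (1 - u)) with ((v - u) * / (1 - u)) in H4 by (field; lra).
  nra.
Qed.

Lemma exp_le' x y : x <= y -> exp x <= exp y.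
Proof. intros [H|H]; [left; apply exp_increasing; auto | subst; lra]. Qed.

Lemma E_bounds u : 0 < u < 1 ->
  - / 2 * xlogx u - / 2 * xlogx (1 - u) <= / 2 * u * (1 - ln u) /\
  - / 2 * xlogx u - / 2 * xlogx (1 - u) <= / 2 * (1 - u) * (1 - ln (1 - u)).
Proof.
  intros Hu. rewrite !xlogx_pos by lra.
  pose proof (xlnx_ge u ltac:(lra)). pose proof (xlnx_ge (1 - u) ltac:(lra)).
  split; nra.
Qed.

Lemma lfun_0 p q b1 b2 b3 : (1 <= p)%nat -> (1 <= q)%nat -> lfun p q b1 b2 b3 0 = 0.
Proof.
  intros Hp Hq. unfold lfun. destruct p; [lia|]. destruct q; [lia|].
  replace (1 - 0) with 1 by ring. unfold xlogx.
  destruct (Req_EM_T 0 0); [|lra]. destruct (Req_EM_T 1 0); [lra|].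
  rewrite ln_1. simpl. ring.
Qed.

Lemma lfun_1 p q b1 b2 b3 : lfun p q b1 b2 b3 1 = b1 + b2 + b3.
Proof.
  unfold lfun. replace (1 - 1) with 0 by ring. unfold xlogx.
  destruct (Req_EM_T 0 0); [|lra]. destruct (Req_EM_T 1 0); [lra|].
  rewrite ln_1, !pow1. ring.
Qed.

Lemma loc1 p q K e b2 b3 u : (2 <= p)%nat -> (p <= q)%nat -> 0 < K -> 0 < e -> 0 <= b3 ->
  b2 < K - b3 - e -> exp (- K) < e * (/ 2) ^ p ->
  0 < u < 1 -> 0 <= lfun p q (- K) b2 b3 u ->
  u < / 2 /\ u <= exp (1 - K).
Proof.
  intros Hp Hpq HK He Hb3 Hb2 HF Hu Hl.
  unfold lfun in Hl. destruct (E_bounds u Hu) as [E1 E2].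
  set (E := - / 2 * xlogx u - / 2 * xlogx (1 - u)) in *.
  pose proof (pow01 p u ltac:(lra)). pose proof (pow01 q u ltac:(lra)).
  assert (Hqp : u ^ q <= u ^ p) by (apply pow_dec; lra || lia).
  assert (Hp2 : u ^ p <= u ^ 2) by (apply pow_dec; lra || lia).
  assert (b2 * u ^ p <= (K - b3 - e) * u ^ p) by (apply Rmult_le_compat_r; lra).
  assert (Hmain : K * (u - u ^ p) + e * u ^ p <= E).
  { assert (b3 * u ^ q <= b3 * u ^ p) by (apply Rmult_le_compat_l; lra).
    unfold E. nra. }
  simpl in Hp2.
  destruct (Rlt_or_le u (/2)) as [Hlt|Hge].
  - split; auto.
    assert (u ^ p <= u / 2) by nra.
    assert (K * (u / 2) <= K * (u - u ^ p)) by (apply Rmult_le_compat_l; lra).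
    assert (0 <= e * u ^ p) by nra.
    assert (K * (u / 2) <= / 2 * u * (1 - ln u)) by lra.
    assert (K <= 1 - ln u).
    { apply (Rmult_le_reg_l u); [lra|]. nra. }
    rewrite <- (exp_ln u) by lra. apply exp_le'. lra.
  - exfalso.
    assert (Hpw : (/2) ^ p <= u ^ p) by (apply pow_incr; lra).
    pose proof (Gbound (1 - u) K ltac:(lra)).
    assert (u ^ p <= u * u) by lra.
    assert ((1 - u) / 2 <= u - u ^ p) by nra.
    assert (K * ((1 - u) / 2) <= K * (u - u ^ p)) by (apply Rmult_le_compat_l; lra).
    assert (e * (/2) ^ p <= e * u ^ p) by (apply Rmult_le_compat_l; lra).
    assert (K * ((1 - u) / 2) + e * (/ 2) ^ p <= / 2 * (1 - u) * (1 - ln (1 - u))) by lra.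
    assert (0 < (/2) ^ p) by (apply pow_lt; lra).
    nra.
Qed.

Lemma loc2 p q K e b2 b3 u : (2 <= p)%nat -> (p <= q)%nat -> 0 < K -> 0 < e -> 0 <= b3 ->
  K - b3 + e < b2 -> exp (- K) < e * (/ 2) ^ p ->
  0 < u < 1 -> - K + b2 + b3 <= lfun p q (- K) b2 b3 u ->
  / 2 < u /\ exp (K - 1) * (1 + 2 * (b2 - (K - b3 + e))) <= / (1 - u).
Proof.
  intros Hp Hpq HK He Hb3 Hb2 HF Hu Hl.
  unfold lfun in Hl. destruct (E_bounds u Hu) as [E1 E2].
  set (E := - / 2 * xlogx u - / 2 * xlogx (1 - u)) in *.
  set (t := b2 - (K - b3 + e)).
  assert (Ht : 0 < t) by (unfold t; lra).
  pose proof (pow01 p u ltac:(lra)). pose proof (pow01 q u ltac:(lra)).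
  assert (Hqp : u ^ q <= u ^ p) by (apply pow_dec; lra || lia).
  assert (Hp2 : u ^ p <= u ^ 2) by (apply pow_dec; lra || lia).
  assert (Hmain : K * (u - u ^ p) + (e + t) * (1 - u ^ p) <= E).
  { assert (b3 * (u ^ p - u ^ q) >= 0) by nra.
    replace b2 with (K - b3 + e + t) in Hl by (unfold t; ring).
    unfold E. nra. }
  simpl in Hp2.
  assert (0 < (/2) ^ p) by (apply pow_lt; lra).
  assert ((/2) ^ p <= 1) by (apply pow01; lra).
  destruct (Rle_or_lt u (/2)) as [Hle|Hgt].
  - exfalso.
    assert (u ^ p <= u / 2) by nra.
    assert (K * (u / 2) <= K * (u - u ^ p)) by (apply Rmult_le_compat_l; lra).
    assert ((e + t) * / 2 <= (e + t) * (1 - u ^ p)) by (apply Rmult_le_compat_l; lra).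
    pose proof (Gbound u K ltac:(lra)).
    assert (e * (/ 2) ^ p <= e) by nra.
    nra.
  - split; auto.
    set (w := 1 - u).
    assert (u ^ p <= u * u) by lra.
    assert (w / 2 <= u - u ^ p) by (unfold w; nra).
    assert (w <= 1 - u ^ p) by (unfold w; nra).
    assert (K * (w / 2) <= K * (u - u ^ p)) by (apply Rmult_le_compat_l; lra).
    assert ((e + t) * w <= (e + t) * (1 - u ^ p)) by (apply Rmult_le_compat_l; lra).
    assert (Hw : 0 < w) by (unfold w; lra).
    assert (K * (w / 2) + (e + t) * w <= / 2 * w * (1 - ln w)) by (unfold w in *; lra).
    assert (K + 2 * (e + t) <= 1 - ln w).
    { apply (Rmult_le_reg_l w); [lra|]. nra. }
    assert (Hlw : ln w <= 1 - K - 2 * t) by lra.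
    assert (w <= exp (1 - K - 2 * t)) by (rewrite <- (exp_ln w) by lra; apply exp_le'; lra).
    assert (exp (K - 1) * (1 + 2 * t) <= exp (K - 1 + 2 * t)).
    { rewrite exp_plus. apply Rmult_le_compat_l; [left; apply exp_pos|]. apply exp_ineq1_le. }
    assert (exp (K - 1 + 2 * t) = / exp (1 - K - 2 * t)).
    { rewrite <- exp_Ropp. f_equal. ring. }
    assert (/ exp (1 - K - 2 * t) <= / w) by (apply Rinv_le_contravar; lra).
    lra.
Qed.

Lemma not_max0 p q b1 b2 b3 : (1 <= p)%nat -> (1 <= q)%nat -> 0 <= b3 ->
  ~ is_global_max01 (lfun p q b1 b2 b3) 0.
Proof.
  intros Hp Hq Hb3 [_ Hm].
  set (h := exp (- (2 * (Rabs b1 + Rabs b2 + 1)))).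
  assert (Hh0 : 0 < h) by apply exp_pos.
  assert (Hh1 : h < 1).
  { unfold h. pose proof (Rabs_pos b1). pose proof (Rabs_pos b2).
    pose proof (exp_increasing (- (2 * (Rabs b1 + Rabs b2 + 1))) 0 ltac:(lra)) as He.
    rewrite exp_0 in He. exact He. }
  specialize (Hm h ltac:(lra)). rewrite lfun_0 in Hm by auto.
  unfold lfun in Hm. rewrite !xlogx_pos in Hm by lra.
  assert (Hlh : ln h = - (2 * (Rabs b1 + Rabs b2 + 1))) by (unfold h; apply ln_exp).
  rewrite Hlh in Hm.
  pose proof (ln_le_m1 (1 - h) ltac:(lra)).
  pose proof (pow01 p h ltac:(lra)). pose proof (pow01 q h ltac:(lra)).
  assert (h ^ p <= h ^ 1) by (apply pow_dec; lra || lia). simpl in H2.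
  pose proof (Rabs_pos b1). pose proof (Rabs_pos b2).
  assert (- Rabs b1 * h <= b1 * h).
  { pose proof (Rle_abs (- b1)) as Ha; rewrite Rabs_Ropp in Ha.
    apply Rmult_le_compat_r; lra. }
  assert (- Rabs b2 * h <= b2 * h ^ p).
  { destruct (Rle_or_lt 0 b2).
    - rewrite Rabs_pos_eq by lra. nra.
    - rewrite Rabs_left by lra. nra. }
  assert (0 <= b3 * h ^ q) by nra.
  assert (0 <= - ((1 - h) * ln (1 - h))) by nra.
  nra.
Qed.

Lemma not_max1 p q b1 b2 b3 : 0 <= b3 ->
  ~ is_global_max01 (lfun p q b1 b2 b3) 1.
Proof.
  intros Hb3 [_ Hm].
  set (c := INR p * Rabs b2 + INR q * b3 + Rabs b1 + 1).
  pose proof (pos_INR p). pose proof (pos_INR q).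
  pose proof (Rabs_pos b1). pose proof (Rabs_pos b2).
  assert (Hc : 1 <= c) by (unfold c; nra).
  set (h := exp (- (2 * c))).
  assert (Hh0 : 0 < h) by apply exp_pos.
  assert (Hh1 : h < 1).
  { unfold h. rewrite <- exp_0. apply exp_increasing. lra. }
  specialize (Hm (1 - h) ltac:(lra)). rewrite lfun_1 in Hm.
  unfold lfun in Hm. replace (1 - (1 - h)) with h in Hm by ring.
  rewrite !xlogx_pos in Hm by lra.
  assert (Hlh : ln h = - (2 * c)) by (unfold h; apply ln_exp).
  rewrite Hlh in Hm.
  pose proof (ln_le_m1 (1 - h) ltac:(lra)).
  pose proof (pow_diff p (1 - h) 1 ltac:(lra) ltac:(lra) ltac:(lra)) as P5.
  pose proof (pow_diff q (1 - h) 1 ltac:(lra) ltac:(lra) ltac:(lra)) as P6.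
  rewrite pow1 in P5, P6. replace (1 - (1 - h)) with h in P5, P6 by ring.
  pose proof (pow01 p (1 - h) ltac:(lra)). pose proof (pow01 q (1 - h) ltac:(lra)).
  assert (b2 * ((1 - h) ^ p - 1) >= - (Rabs b2 * (INR p * h))).
  { destruct (Rle_or_lt 0 b2).
    - rewrite Rabs_pos_eq by lra. nra.
    - rewrite Rabs_left by lra. nra. }
  assert (b3 * ((1 - h) ^ q - 1) >= - (b3 * (INR q * h))) by nra.
  assert (- b1 * h >= - Rabs b1 * h) by (pose proof (Rle_abs b1); nra).
  assert (0 <= - ((1 - h) * ln (1 - h))) by nra.
  assert (h * c > 0) by nra.
  unfold c in *. nra.
Qed.

Lemma Kbig C1 C2 e P : 0 <= C1 -> 0 <= C2 -> 0 < e -> 0 < P ->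
  exists K0, forall K, K0 < K ->
    0 < K /\ exp (- K) < e * P /\ C1 * (K + e) + C2 < exp (K - 1) / 2 /\ C1 <= exp (K - 1).
Proof.
  intros H1 H2 He HP.
  assert (Hi : 0 < / (e * P)) by (apply Rinv_0_lt_compat; nra).
  exists (1 + 8 * (C1 + 1) + C1 * (1 + e) + C2 + / (e * P)).
  intros K HK.
  assert (0 <= C1 * (1 + e)) by nra.
  assert (Hx0 : 0 < K) by lra.
  split; [lra|]. split.
  - pose proof (exp_ineq1_le K).
    rewrite exp_Ropp.
    replace (e * P) with (/ / (e * P)) by (rewrite Rinv_inv; auto).
    apply Rinv_lt_contravar.
    + apply Rmult_lt_0_compat; [auto| apply exp_pos].
    + lra.
  - set (x := K - 1).
    assert (Hx : 8 * (C1 + 1) + C1 * (1 + e) + C2 < x) by (unfold x; lra).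
    assert (Hex : exp x = exp (x / 2) * exp (x / 2)) by (rewrite <- exp_plus; f_equal; field).
    pose proof (exp_ineq1_le (x / 2)).
    assert ((1 + x / 2) * (1 + x / 2) <= exp x).
    { rewrite Hex. apply Rmult_le_compat; nra. }
    assert (Hke : K + e = x + 1 + e) by (unfold x; ring). rewrite Hke.
    split; nra.
Qed.

Lemma core p q K b2 b3 e u1 u2 :
  (2 <= p)%nat -> (p <= q)%nat -> 0 < K -> 0 < e -> 0 <= b3 ->
  exp (- K) < e * (/ 2) ^ p ->
  INR p * INR (pred p) * (K + e) + INR q * b3 * INR (pred q) < exp (K - 1) / 2 ->
  INR p * INR (pred p) <= exp (K - 1) ->
  0 < u1 -> u1 < u2 -> u2 < 1 ->
  is_global_max01 (lfun p q (- K) b2 b3) u1 ->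
  is_global_max01 (lfun p q (- K) b2 b3) u2 ->
  - e <= - K + b2 + b3 <= e.
Proof.
  intros Hp Hpq HK He Hb3 HF1 HF2 HF3 H0 H1 H2 Hm1 Hm2.
  pose proof (fermat p q (- K) b2 b3 u1 ltac:(lra) Hm1) as D1.
  pose proof (fermat p q (- K) b2 b3 u2 ltac:(lra) Hm2) as D2.
  pose proof (Dl_mono p q (- K) b2 b3 u1 u2 Hb3 H0 H1 H2) as Hmono.
  rewrite D1, D2 in Hmono.
  rewrite (Rmax_left b3 0) in Hmono by lra.
  set (C1 := INR p * INR (pred p)) in *.
  set (C2 := INR q * b3 * INR (pred q)) in *.
  assert (HC1 : 0 <= C1) by (unfold C1; apply Rmult_le_pos; apply pos_INR).
  assert (HC2 : 0 <= C2) by (unfold C2; apply Rmult_le_pos; [apply Rmult_le_pos; [apply pos_INR|lra]|apply pos_INR]).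
  assert (Hst : / 2 * / u2 + / 2 * / (1 - u1) - C1 * Rmax b2 0 - C2 <= 0).
  { assert (Heq : INR p * Rmax b2 0 * INR (pred p) = C1 * Rmax b2 0) by (unfold C1; ring).
    rewrite Heq in Hmono.
    apply Rnot_lt_le; intro Hc.
    assert (0 < (u2 - u1) * (/ 2 * / u2 + / 2 * / (1 - u1) - C1 * Rmax b2 0 - C2)) by (apply Rmult_lt_0_compat; lra).
    lra. }
  assert (Hiu2 : 0 < / u2) by (apply Rinv_0_lt_compat; lra).
  assert (Hiu1 : 0 < / (1 - u1)) by (apply Rinv_0_lt_compat; lra).
  assert (Hp1 : (1 <= p)%nat) by lia. assert (Hq1 : (1 <= q)%nat) by lia.
  split; apply Rnot_lt_le; intro Hs.
  -
    assert (Hb2 : b2 < K - b3 - e) by lra.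
    destruct Hm2 as [R2 M2].
    pose proof (M2 0 ltac:(lra)) as L2. rewrite lfun_0 in L2 by auto.
    destruct (loc1 p q K e b2 b3 u2 Hp Hpq HK He Hb3 Hb2 HF1 ltac:(lra) L2) as [_ Hu2].
    assert (exp (K - 1) <= / u2).
    { replace (K - 1) with (- (1 - K)) by ring. rewrite exp_Ropp.
      apply Rinv_le_contravar; lra. }
    assert (Rmax b2 0 <= K) by (apply Rmax_lub; lra).
    assert (C1 * Rmax b2 0 <= C1 * K) by (apply Rmult_le_compat_l; lra).
    assert (C1 * K <= C1 * (K + e)) by (apply Rmult_le_compat_l; lra).
    lra.
  -
    assert (Hb2 : K - b3 + e < b2) by lra.
    destruct Hm1 as [R1 M1].
    pose proof (M1 1 ltac:(lra)) as L1. rewrite lfun_1 in L1.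
    destruct (loc2 p q K e b2 b3 u1 Hp Hpq HK He Hb3 Hb2 HF1 ltac:(lra) L1) as [_ Hu1].
    set (t := b2 - (K - b3 + e)) in *.
    assert (Ht : 0 < t) by (unfold t; lra).
    assert (Rmax b2 0 <= K + e + t) by (apply Rmax_lub; unfold t; lra).
    assert (C1 * Rmax b2 0 <= C1 * (K + e + t)) by (apply Rmult_le_compat_l; lra).
    assert (C1 * t <= exp (K - 1) * t) by (apply Rmult_le_compat_r; lra).
    nra.
Qed.

Theorem corollary4 (p q : nat) (b3 u0 : R) (r : R -> R) :
  (2 <= p)%nat -> (p < q)%nat -> (q <= 5 * p - 1)%nat ->
  0 <= b3 ->
  0 < u0 < 1 ->
  u0_eq p q b3 u0 ->
  (forall u, 0 < u < 1 -> u0_eq p q b3 u -> u = u0) ->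
  (forall b1, b1 < beta1c p q u0 ->
     forall b2, two_global_max p q b1 b2 b3 <-> b2 = r b1) ->
  forall eps, 0 < eps ->
    exists M, forall b1, b1 < M -> b1 < beta1c p q u0 ->
      Rabs (Rabs (r b1 + b1 + b3)) < eps.
Proof.
  intros Hp Hpq Hq5 Hb3 Hu0 Hu0eq Huniq Hr eps Heps.
  set (e := eps / 2).
  assert (He : 0 < e) by (unfold e; lra).
  assert (HC1 : 0 <= INR p * INR (pred p)) by (apply Rmult_le_pos; apply pos_INR).
  assert (HC2 : 0 <= INR q * b3 * INR (pred q))
    by (apply Rmult_le_pos; [apply Rmult_le_pos; [apply pos_INR|lra]|apply pos_INR]).
  assert (HP : 0 < (/ 2) ^ p) by (apply pow_lt; lra).
  destruct (Kbig _ _ e _ HC1 HC2 He HP) as [K0 HK0].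
  exists (- K0). intros b1 Hb1 Hbc.
  destruct (HK0 (- b1) ltac:(lra)) as (HK & HF1 & HF2 & HF3).
  assert (Htwo : two_global_max p q b1 (r b1) b3) by (apply (Hr b1 Hbc); reflexivity).
  destruct Htwo as (u1 & u2 & Hne & Hm1 & Hm2).
  set (b2 := r b1) in *.
  replace b1 with (- (- b1)) in Hm1, Hm2 by ring.
  assert (Hp1 : (1 <= p)%nat) by lia. assert (Hq1 : (1 <= q)%nat) by lia.
  assert (Hint : forall u, is_global_max01 (lfun p q (- - b1) b2 b3) u -> 0 < u < 1).
  { intros u Hm. pose proof Hm as [[Ha Hb] _].
    destruct Ha as [Ha|Ha]; [|subst; exfalso; exact (not_max0 p q _ _ b3 Hp1 Hq1 Hb3 Hm)].
    destruct Hb as [Hb|Hb]; [lra|subst; exfalso; exact (not_max1 p q _ _ b3 Hb3 Hm)]. }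
  pose proof (Hint u1 Hm1). pose proof (Hint u2 Hm2).
  assert (Hpq' : (p <= q)%nat) by lia.
  assert (Hs : - e <= - - b1 + b2 + b3 <= e).
  { destruct (Rlt_or_le u1 u2) as [Hlt|Hle].
    - exact (core p q (- b1) b2 b3 e u1 u2 Hp Hpq' HK He Hb3 HF1 HF2 HF3
               ltac:(lra) Hlt ltac:(lra) Hm1 Hm2).
    - assert (u2 < u1) by (destruct Hle; [auto| congruence]).
      exact (core p q (- b1) b2 b3 e u2 u1 Hp Hpq' HK He Hb3 HF1 HF2 HF3
               ltac:(lra) H1 ltac:(lra) Hm2 Hm1). }
  rewrite Rabs_Rabsolu. apply Rabs_def1; unfold e in Hs; lra.
Qed.
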